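(* For any $(a,b,c,\lambda,\delta),(\bar a,\bar b,\bar c,\bar\lambda,\bar\delta)\in(\mathbb F^\times)^4\times\mathbb F$ and any nonzero $\bar w\in W_{\bar\lambda}^{\bar\delta}(\bar a,\bar b,\bar c)$, there exists a $\triangle_q$-module homomorphism $W_\lambda^\delta(a,b,c)\to W_{\bar\lambda}^{\bar\delta}(\bar a,\bar b,\bar c)$ sending $w_0$ to $\bar w$ if and only if (i) there exists a $\triangle_q$-module homomorphism $M_\lambda(a,b,c)\to W_{\bar\lambda}^{\bar\delta}(\bar a,\bar b,\bar c)$ sending $m_0$ to $\bar w$, and (ii) $\delta+a^{d'}\lambda^{-d'}+a^{-d'}\lambda^{d'}=\bar\delta+\bar a^{d'}\bar\lambda^{-d'}+\bar a^{-d'}\bar\lambda^{d'}$.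
   Context: $\mathbb F$ is an algebraically closed field and $q\in\mathbb F^\times$ a root of unity of order $d\notin\{1,2,4\}$; $d'=d$ if $d$ odd, $d'=d/2$ if $d$ even. $\triangle_q$ is the unital associative $\mathbb F$-algebra with generators $A,B,C$ subject to: each of $A+\frac{qBC-q^{-1}CB}{q^2-q^{-2}}$, $B+\frac{qCA-q^{-1}AC}{q^2-q^{-2}}$, $C+\frac{qAB-q^{-1}BA}{q^2-q^{-2}}$ is central; $\alpha,\beta,\gamma$ are these times $q+q^{-1}$. For $(a,b,c,\lambda)\in(\mathbb F^\times)^4$, $i\in\mathbb N$: $\theta_i=a\lambda^{-1}q^{2i}+a^{-1}\lambda q^{-2i}$, $\theta_i^*=b\lambda^{-1}q^{2i}+b^{-1}\lambda q^{-2i}$, $\varphi_i=a^{-1}b^{-1}\lambda q(q^i-q^{-i})(\lambda^{-1}q^{i-1}-\lambda q^{1-i})(q^{-i}-abc\lambda^{-1}q^{i-1})(q^{-i}-abc^{-1}\lambda^{-1}q^{i-1})$. $M_\lambda(a,b,c)$ has basis $\{m_i\}_{i\in\mathbb N}$, $(A-\theta_i)m_i=m_{i+1}$, $(B-\theta_i^* )m_i=\varphi_im_{i-1}$, $\alpha,\beta,\gamma$ acting as $(b+b^{-1})(c+c^{-1})+(a+a^{-1})(\lambda q+\lambda^{-1}q^{-1})$, $(c+c^{-1})(a+a^{-1})+(b+b^{-1})(\lambda q+\lambda^{-1}q^{-1})$, $(a+a^{-1})(b+b^{-1})+(c+c^{-1})(\lambda q+\lambda^{-1}q^{-1})$. For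 $\delta\in\mathbb F$, $W_\lambda^\delta(a,b,c)$ is the quotient of $M_\lambda(a,b,c)$ by the span of $\{\delta m_i-m_{d'+i}\}_{i\in\mathbb N}$, and $w_i$ denotes the image of $m_i$. Barred symbols denote the same objects for the barred parameters. *)

(* Defs.v *)
From HB Require Import structures.
From mathcomp Require Import all_boot all_order all_algebra.
Set Implicit Arguments. Unset Strict Implicit. Unset Printing Implicit Defensive.
Import Order.TTheory GRing.Theory Num.Theory.
Local Open Scope ring_scope.

Definition dprime (d : nat) : nat := if odd d then d else d./2.

Section AW.
Variable F : fieldType.
Variable q : F.

Definition theta (a lam : F) (i : nat) : F :=
  a * lam^-1 * q ^+ (2 * i) + a^-1 * lam * q ^- (2 * i).
Definition thetas (b lam : F) (i : nat) : F :=
  b * lam^-1 * q ^+ (2 * i) + b^-1 * lam * q ^- (2 * i).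
Definition phi (a b c lam : F) (i : nat) : F :=
  a^-1 * b^-1 * lam * q * (q ^+ i - q ^- i)
  * (lam^-1 * q ^ (i%:Z - 1) - lam * q ^ (1 - i%:Z))
  * (q ^- i - a * b * c * lam^-1 * q ^ (i%:Z - 1))
  * (q ^- i - a * b * c^-1 * lam^-1 * q ^ (i%:Z - 1)).

(* scalar by which gamma acts on M_lam(a,b,c) *)
Definition gammaM (a b c lam : F) : F :=
  (a + a^-1) * (b + b^-1) + (c + c^-1) * (lam * q + lam^-1 * q^-1).

(* The module M_lam(a,b,c): the vector space {poly F} with basis m_i = 'X^i. *)
Definition AM (a b c lam : F) (p : {poly F}) : {poly F} :=
  \sum_(i < size p) p`_i *: (theta a lam i *: 'X^i + 'X^(i.+1)).
Definition BM (a b c lam : F) (p : {poly F}) : {poly F} :=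
  \sum_(i < size p) p`_i *: (thetas b lam i *: 'X^i + phi a b c lam i *: 'X^(i.-1)).
(* C is determined by the central element gamma:
   gamma = (q+q^-1) (C + (qAB - q^-1 BA)/(q^2-q^-2)) *)
Definition CM (a b c lam : F) (p : {poly F}) : {poly F} :=
  (gammaM a b c lam / (q + q^-1)) *: p
  - (q^+2 - q^-2)^-1 *: (q *: AM a b c lam (BM a b c lam p)
                          - q^-1 *: BM a b c lam (AM a b c lam p)).

(* The quotient W^delta_lam(a,b,c) of M_lam(a,b,c) by the span of
   {delta m_i - m_{d'+i}}, i.e. by the ideal ('X^d' - delta) of F[X].
   It is modelled on 'rV_n (n = d'), through the projection piW (coordinates of
   the remainder mod 'X^n - delta in the basis w_0..w_{n-1}) and the section
   liftW; the actions on W are induced from M. *)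
Definition piW (n : nat) (delta : F) (p : {poly F}) : 'rV[F]_n :=
  \row_(i < n) (p %% ('X^n - delta%:P))`_i.
Definition liftW (n : nat) (v : 'rV[F]_n) : {poly F} := \sum_(i < n) v 0 i *: 'X^i.

Definition AW n delta a b c lam (v : 'rV[F]_n) : 'rV[F]_n :=
  piW n delta (AM a b c lam (liftW v)).
Definition BW n delta a b c lam (v : 'rV[F]_n) : 'rV[F]_n :=
  piW n delta (BM a b c lam (liftW v)).
Definition CW n delta a b c lam (v : 'rV[F]_n) : 'rV[F]_n :=
  piW n delta (CM a b c lam (liftW v)).

Definition wvec n delta (i : nat) : 'rV[F]_n := piW n delta 'X^i.

End AW.

Definition intertwines (U V : Type) (f : U -> V) (X : U -> U) (Y : V -> V) :=
  forall u, f (X u) = Y (f u).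

Definition homMW (F : fieldType) (q : F) (n : nat)
  (a b c lam : F) (dbar abar bbar cbar lbar : F) (f : {poly F} -> 'rV[F]_n) :=
  linear f /\
  [/\ intertwines f (AM q a b c lam) (AW q dbar abar bbar cbar lbar),
      intertwines f (BM q a b c lam) (BW q dbar abar bbar cbar lbar) &
      intertwines f (CM q a b c lam) (CW q dbar abar bbar cbar lbar)].

Definition homWW (F : fieldType) (q : F) (n : nat)
  (delta a b c lam : F) (dbar abar bbar cbar lbar : F) (f : 'rV[F]_n -> 'rV[F]_n) :=
  linear f /\
  [/\ intertwines f (AW q delta a b c lam) (AW q dbar abar bbar cbar lbar),
      intertwines f (BW q delta a b c lam) (BW q dbar abar bbar cbar lbar) &
      intertwines f (CW q delta a b c lam) (CW q dbar abar bbar cbar lbar)].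

(* Main.v *)
Require Import Defs.
From HB Require Import structures.
From mathcomp Require Import all_boot all_order all_algebra.
From mathcomp Require Import ring.
Set Implicit Arguments. Unset Strict Implicit. Unset Printing Implicit Defensive.
Import GRing.Theory.
Local Open Scope ring_scope.


Section Lin.
Variable F : fieldType.

Section LinF.
Variables (U V : lmodType F) (f : U -> V) (hf : linear f).
Lemma lin0 : f 0 = 0.
Proof.
have := hf 1 0 0; rewrite !scale1r !addr0 => h.
by apply: (addrI (f 0)); rewrite -h addr0.
Qed.
Lemma linD u v : f (u + v) = f u + f v.
Proof. by have := hf 1 u v; rewrite !scale1r. Qed.
Lemma linZ a u : f (a *: u) = a *: f u.
Proof. by have := hf a u 0; rewrite !addr0 lin0 addr0. Qed.
Lemma linN u : f (- u) = - f u.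
Proof. by rewrite -scaleN1r linZ scaleN1r. Qed.
Lemma linB u v : f (u - v) = f u - f v.
Proof. by rewrite linD linN. Qed.
Lemma lin_sum k (G : 'I_k -> U) : f (\sum_(i < k) G i) = \sum_(i < k) f (G i).
Proof.
elim: k G => [|k IH] G; first by rewrite !big_ord0 lin0.
by rewrite !big_ord_recr /= linD IH.
Qed.
End LinF.

Lemma lin_comp (U V W : lmodType F) (f : U -> V) (g : V -> W) :
  linear f -> linear g -> linear (fun x => g (f x)).
Proof. by move=> hf hg a u v /=; rewrite hf hg. Qed.

Definition Op (V : lmodType F) (w : nat -> V) (p : {poly F}) : V :=
  \sum_(i < size p) p`_i *: w i.

Lemma Op_widen (V : lmodType F) (w : nat -> V) (p : {poly F}) N :
  (size p <= N)%N -> Op w p = \sum_(i < N) p`_i *: w i.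
Proof.
move=> le; rewrite /Op (big_ord_widen N (fun i => p`_i *: w i) le) big_mkcond.
apply: eq_bigr => i _; case: ifP => // /negbT; rewrite -leqNgt => h.
by rewrite nth_default // scale0r.
Qed.

Lemma Op_linear (V : lmodType F) (w : nat -> V) : linear (Op w).
Proof.
move=> a p r /=.
set N := maxn (size (a *: p + r)) (maxn (size p) (size r)).
have h1 : (size p <= N)%N by rewrite /N !leq_max leqnn orbT.
have h2 : (size r <= N)%N by rewrite /N !leq_max leqnn !orbT.
rewrite !(@Op_widen _ _ _ N) ?leq_maxl //.
rewrite scaler_sumr -big_split /=; apply: eq_bigr => i _.
by rewrite coefD coefZ scalerDl scalerA.
Qed.

Lemma Op_Xn (V : lmodType F) (w : nat -> V) j : Op w 'X^j = w j.
Proof.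
rewrite /Op size_polyXn big_ord_recr /= big1 ?add0r; first by rewrite coefXn eqxx scale1r.
by move=> i _; rewrite coefXn ltn_eqF // scale0r.
Qed.

Lemma poly_expand (p : {poly F}) : p = \sum_(i < size p) p`_i *: 'X^i.
Proof. by rewrite -poly_def coefK. Qed.

Lemma lin_poly_ext (V : lmodType F) (f g : {poly F} -> V) :
  linear f -> linear g -> (forall j, f 'X^j = g 'X^j) -> forall p, f p = g p.
Proof.
move=> hf hg e p; rewrite (poly_expand p) !lin_sum //.
by apply: eq_bigr => i _; rewrite !linZ // e.
Qed.

End Lin.


Section WS.
Variables (F : fieldType) (n : nat) (delta : F).
Hypothesis hn : (0 < n)%N.
Let m : {poly F} := 'X^n - delta%:P.

Lemma size_m : size m = n.+1. Proof. exact: size_XnsubC. Qed.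
Lemma m_neq0 : m != 0. Proof. by rewrite -size_poly_eq0 size_m. Qed.

Lemma piW_linear : linear (piW n delta).
Proof. by move=> k p r; apply/rowP => i; rewrite !mxE modpD modpZl coefD coefZ. Qed.

Lemma liftW_linear : linear (@liftW F n).
Proof.
move=> k v w; rewrite /liftW scaler_sumr -big_split /=; apply: eq_bigr => i _.
by rewrite !mxE scalerDl scalerA.
Qed.

Definition vE (v : 'rV[F]_n) (k : nat) : F := oapp (fun i : 'I_n => v 0 i) 0 (insub k).
Lemma liftW_poly (v : 'rV[F]_n) : liftW v = \poly_(i < n) vE v i.
Proof. by rewrite poly_def; apply: eq_bigr => i _; rewrite /vE valK. Qed.

Lemma piW_liftW v : piW n delta (liftW v) = v.
Proof.
apply/rowP => i; rewrite mxE modp_small; last first.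
  by rewrite size_m liftW_poly ltnS size_poly.
by rewrite liftW_poly coef_poly ltn_ord /vE valK.
Qed.

Lemma liftW_piW p : liftW (piW n delta p) = p %% m.
Proof.
rewrite /liftW; under eq_bigr do rewrite mxE.
rewrite -poly_def; apply/polyP => i; rewrite coef_poly; case: ifP => // /negbT.
rewrite -leqNgt => h; rewrite nth_default //.
have := ltn_modpN0 p m_neq0; rewrite size_m ltnS => h2; exact: leq_trans h2 h.
Qed.

Lemma piW_eq0 p : m %| p -> piW n delta p = 0.
Proof. by move=> /modp_eq0 h; apply/rowP => i; rewrite !mxE h coef0. Qed.

Lemma piW_div p r : m %| (p - r) -> piW n delta p = piW n delta r.
Proof.
move=> h; apply/eqP; rewrite -subr_eq0 -(linB piW_linear) piW_eq0 //.
Qed.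

Lemma dvd_piW p : m %| p - liftW (piW n delta p).
Proof.
by rewrite liftW_piW {1}(divp_eq p m) addrK dvdp_mull.
Qed.

Lemma piW_T (T : {poly F} -> {poly F}) : linear T -> (forall p, m %| p -> m %| T p) ->
  forall p, piW n delta (T p) = piW n delta (T (liftW (piW n delta p))).
Proof.
move=> lT hT p; apply: piW_div; rewrite -(linB lT); apply: hT; exact: dvd_piW.
Qed.

Lemma gkill (V : lmodType F) (g : {poly F} -> V) : linear g ->
  (forall j, g ('X^j * m) = 0) -> forall p, g (liftW (piW n delta p)) = g p.
Proof.
move=> lg hg p.
have -> : g p = g (p %/ m * m) + g (liftW (piW n delta p)).
  by rewrite -(linD lg) liftW_piW -divp_eq.
suff -> : g (p %/ m * m) = 0 by rewrite add0r.
rewrite (poly_expand (p %/ m)) mulr_suml (lin_sum lg) big1 // => i _.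
by rewrite -scalerAl (linZ lg) hg scaler0.
Qed.

Lemma dvdm_Z c p : m %| p -> m %| c *: p.
Proof. by move=> h; rewrite -mul_polyC dvdp_mull. Qed.

Lemma Xm j : 'X^j * m = 'X^(j + n) - delta *: 'X^j.
Proof. by rewrite /m mulrBr -exprD mulrC mul_polyC. Qed.

Lemma piW_Xn j : piW n delta 'X^(j + n) = delta *: piW n delta 'X^j.
Proof.
rewrite -(linZ piW_linear); apply: piW_div; rewrite -Xm; exact: dvdp_mulIr.
Qed.

End WS.


Lemma prod4 (F : comRingType) (C f1 f2 f3 f4 e : F) : e * e = 1 ->
  C * (e * f1) * (e * f2) * (e * f3) * (e * f4) = C * f1 * f2 * f3 * f4.
Proof.
move=> h; transitivity (C * f1 * f2 * f3 * f4 * ((e * e) * (e * e))); first by ring.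
by rewrite h mulr1 mulr1.
Qed.

Lemma mulE4 (F : comRingType) (E x y : F) : E * E = 1 -> x = y * ((E*E)*(E*E)) -> x = y.
Proof. by move=> h ->; rewrite h !mulr1. Qed.

Section AB.
Variables (F : fieldType) (q : F) (n : nat).
Hypothesis hq : q != 0.
Hypothesis hz : (q ^+ 2) ^+ n = 1.
Hypothesis hn : (0 < n)%N.

Let e := q ^+ n.
Lemma ee : e * e = 1. Proof. by rewrite /e -exprD addnn -mul2n exprM. Qed.
Lemma eV : e^-1 = e.
Proof. by apply: (mulfI (x:=e)); [rewrite /e expf_neq0 | rewrite ee divff // /e expf_neq0]. Qed.

Lemma expV_add i : q ^- (i + n) = q ^- i * e.
Proof. by rewrite exprD invfM -/e eV. Qed.

Lemma q2per i : q ^+ (2 * (i + n)) = q ^+ (2 * i).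
Proof. by rewrite mulnDr exprD (exprM q 2 n) hz mulr1. Qed.

Lemma theta_per a lam i : theta q a lam (i + n) = theta q a lam i.
Proof.
by rewrite /theta q2per.
Qed.
Lemma thetas_per b lam i : thetas q b lam (i + n) = thetas q b lam i.
Proof.
by rewrite /thetas q2per.
Qed.

Lemma zpow1 i : q ^ ((i + n)%N%:Z - 1) = e * q ^ (i%:Z - 1).
Proof.
have -> : ((i + n)%N%:Z - 1 = (i%:Z - 1) + n%:Z)%R by rewrite PoszD; ring.
by rewrite expfzDr // -exprnP mulrC.
Qed.
Lemma zpow2 i : q ^ (1 - (i + n)%N%:Z) = e * q ^ (1 - i%:Z).
Proof.
have -> : ((1 - (i + n)%N%:Z) = (1 - i%:Z) + (- n%:Z))%R by rewrite PoszD; ring.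
by rewrite expfzDr // -exprnN -/e eV mulrC.
Qed.

Lemma phi_per a b c lam i : phi q a b c lam (i + n) = phi q a b c lam i.
Proof.
rewrite /phi expV_add !zpow1 zpow2 exprD -/e.
move: ee; set E := e => hE.
apply: (mulE4 hE); ring.
Qed.

Lemma phi0 a b c lam : phi q a b c lam 0 = 0.
Proof. by rewrite /phi expr0 invr1 subrr !mulr0 !mul0r. Qed.

Lemma phin a b c lam : phi q a b c lam n = 0.
Proof. by rewrite /phi -/e eV subrr !mulr0 !mul0r. Qed.

End AB.


Section Ideal.
Variables (F : fieldType) (q : F) (n : nat) (delta : F).
Hypothesis hq : q != 0.
Hypothesis hz : (q ^+ 2) ^+ n = 1.
Hypothesis hn : (0 < n)%N.
Variables (a b c lam : F).
Let m : {poly F} := 'X^n - delta%:P.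

Lemma AM_lin : linear (AM q a b c lam).
Proof. exact: (Op_linear (fun i => theta q a lam i *: 'X^i + 'X^(i.+1))). Qed.
Lemma BM_lin : linear (BM q a b c lam).
Proof. exact: (Op_linear (fun i => thetas q b lam i *: 'X^i + phi q a b c lam i *: 'X^(i.-1))). Qed.
Lemma AM_Xn j : AM q a b c lam 'X^j = theta q a lam j *: 'X^j + 'X^(j.+1).
Proof. exact: (Op_Xn (fun i => theta q a lam i *: 'X^i + 'X^(i.+1))). Qed.
Lemma BM_Xn j : BM q a b c lam 'X^j = thetas q b lam j *: 'X^j + phi q a b c lam j *: 'X^(j.-1).
Proof. exact: (Op_Xn (fun i => thetas q b lam i *: 'X^i + phi q a b c lam i *: 'X^(i.-1))). Qed.

Lemma CM_lin : linear (CM q a b c lam).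
Proof.
move=> k u v; rewrite /CM !(linD BM_lin, linZ BM_lin, linD AM_lin, linZ AM_lin).
by rewrite -!mul_polyC; ring.
Qed.

Lemma ideal_gen (T : {poly F} -> {poly F}) : linear T ->
  (forall j, m %| T ('X^j * m)) -> forall p, m %| p -> m %| T p.
Proof.
move=> lT hT p /dvdpP [r ->]; rewrite (poly_expand r) mulr_suml (lin_sum lT).
apply: (big_ind (fun x => m %| x)); [exact: dvdp0 | exact: dvdp_add |].
by move=> i _; rewrite -scalerAl (linZ lT); apply: dvdm_Z.
Qed.

Lemma AM_ideal p : m %| p -> m %| AM q a b c lam p.
Proof.
apply: ideal_gen; first exact: AM_lin.
move=> j; rewrite Xm (linB AM_lin) (linZ AM_lin) !AM_Xn theta_per //.
apply/dvdpP; exists (theta q a lam j *: 'X^j + 'X^(j.+1)).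
rewrite /m -!mul_polyC !exprS exprD; ring.
Qed.

Lemma BM_ideal p : m %| p -> m %| BM q a b c lam p.
Proof.
apply: ideal_gen; first exact: BM_lin.
move=> j; rewrite Xm (linB BM_lin) (linZ BM_lin) !BM_Xn.
case: j => [|k].
  rewrite add0n -[n]add0n thetas_per // phi_per // phi0 add0n.
  by apply/dvdpP; exists (thetas q b lam 0)%:P; rewrite /m -!mul_polyC; ring.
rewrite thetas_per // phi_per // addSn /=.
apply/dvdpP; exists (thetas q b lam k.+1 *: 'X^(k.+1) + phi q a b c lam k.+1 *: 'X^k).
rewrite /m -!mul_polyC exprS exprD exprS; ring.
Qed.

Lemma CM_ideal p : m %| p -> m %| CM q a b c lam p.
Proof.
move=> h; rewrite /CM; apply: dvdp_sub; first exact: dvdm_Z.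
apply: dvdm_Z; apply: dvdp_sub; apply: dvdm_Z.
  by apply: AM_ideal; apply: BM_ideal.
by apply: BM_ideal; apply: AM_ideal.
Qed.

Lemma piW_AM p : piW n delta (AM q a b c lam p) = AW q delta a b c lam (piW n delta p).
Proof. exact: (piW_T hn AM_lin AM_ideal). Qed.
Lemma piW_BM p : piW n delta (BM q a b c lam p) = BW q delta a b c lam (piW n delta p).
Proof. exact: (piW_T hn BM_lin BM_ideal). Qed.
Lemma piW_CM p : piW n delta (CM q a b c lam p) = CW q delta a b c lam (piW n delta p).
Proof. exact: (piW_T hn CM_lin CM_ideal). Qed.

Lemma AW_lin : linear (@AW F q n delta a b c lam).
Proof.
move=> k u v; rewrite /AW (liftW_linear k u v) (AM_lin k).
exact: piW_linear.
Qed.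

End Ideal.


Section Ait.
Variables (F : fieldType) (V : lmodType F).

Fixpoint Ait (A : V -> V) (th : nat -> F) (j : nat) (v : V) : V :=
  match j with 0 => v | j.+1 => A (Ait A th j v) - th j *: Ait A th j v end.

Variable A : V -> V.
Hypothesis lA : linear A.

Lemma Ait_lin th j : linear (Ait A th j).
Proof.
elim: j => [|j IH] k u v //=.
rewrite IH (linD lA) (linZ lA) scalerDr scalerA mulrC -scalerA scalerBr.
set x := A _; set y := A _; set z := _ *: Ait A th j u; set w := Ait A th j v.
rewrite opprD !addrA; congr (_ - _); rewrite -!addrA; congr (_ + _); by rewrite addrC.
Qed.

Lemma Ait_ext th th' j v : (forall i, (i < j)%N -> th i = th' i) -> Ait A th j v = Ait A th' j v.
Proof.
elim: j => [|j IH] h //=; rewrite IH ?h // => i hi; apply: h; exact: ltnW.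
Qed.

Lemma Ait_A th j v : Ait A th j (A v) = A (Ait A th j v).
Proof.
elim: j => [|j IH] //=; by rewrite IH (linB lA) (linZ lA).
Qed.

Lemma Ait_comm th th' j k v : Ait A th j (Ait A th' k v) = Ait A th' k (Ait A th j v).
Proof.
elim: k => [|k IH] //=.
by rewrite (linB (Ait_lin th j)) (linZ (Ait_lin th j)) Ait_A IH.
Qed.

Lemma Ait_add th j k v : Ait A th (j + k) v = Ait A (fun i => th (j + i)) k (Ait A th j v).
Proof. by elim: k => [|k IH] //=; rewrite ?addn0 // addnS /= IH. Qed.

End Ait.

Lemma Ait_hom (F : fieldType) (U V : lmodType F) (f : U -> V) (A : U -> U) (B : V -> V) th j u :
  linear f -> (forall x, f (A x) = B (f x)) -> f (Ait A th j u) = Ait B th j (f u).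
Proof.
move=> lf h; elim: j => [|j IH] //=.
by rewrite (linB lf) (linZ lf) h IH.
Qed.


Section Peval.
Variables (F : fieldType) (V : lmodType F) (A : V -> V) (v : V).
Hypothesis lA : linear A.

Definition peval (p : {poly F}) : V := Op (fun i => iter i A v) p.

Lemma peval_lin : linear peval.
Proof. exact: Op_linear. Qed.

Lemma pevalX j : peval 'X^j = iter j A v.
Proof. exact: (Op_Xn (fun i => iter i A v)). Qed.

Lemma pevalMX p : peval ('X * p) = A (peval p).
Proof.
apply: (lin_poly_ext (f := fun p => peval ('X * p)) (g := fun p => A (peval p))).
- by move=> k x y /=; rewrite mulrDr -scalerAr peval_lin.
- exact: (lin_comp peval_lin lA).
by move=> j /=; rewrite -exprS !pevalX.
Qed.

Lemma pevalC c p : peval (c%:P * p) = c *: peval p.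
Proof. by rewrite mul_polyC (linZ peval_lin). Qed.

Lemma peval1 : peval 1 = v.
Proof. by rewrite -(expr0 'X) pevalX. Qed.

Lemma Ait_peval th j : Ait A th j v = peval (\prod_(i < j) ('X - (th i)%:P)).
Proof.
elim: j => [|j IH] /=; first by rewrite big_ord0 peval1.
by rewrite big_ord_recr /= mulrC mulrBl (linB peval_lin) pevalMX pevalC IH.
Qed.

End Peval.

Section Cheb.
Variables (F : closedFieldType) (n : nat) (z : F).
Hypothesis hz : n.-primitive_root z.

Lemma n_gt0 : (0 < n)%N. Proof. exact: prim_order_gt0 hz. Qed.
Lemma z_neq0 : z != 0. Proof. by rewrite (prim_root_eq0 hz) -lt0n n_gt0. Qed.

Lemma prod_lin (w s u : F) : n.-primitive_root w -> s != 0 ->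
  \prod_(i < n) (u - s * w ^+ i) = u ^+ n - s ^+ n.
Proof.
move=> hw hs.
have := congr1 (fun p => p.[u / s]) (factor_Xn_sub_1 hw).
rewrite /= horner_prod big_mkord hornerD hornerN hornerXn hornerC => h.
transitivity (\prod_(i < n) (s * (u / s - w ^+ i))).
  by apply: eq_bigr => i _; field.
rewrite big_split /= prodr_const card_ord.
have h' : \prod_(i < n) (u / s - w ^+ i) = (u / s) ^+ n - 1.
  by rewrite -h; apply: eq_bigr => i _; rewrite hornerXsubC.
rewrite h' exprMn exprVn; field; by rewrite expf_neq0.
Qed.

Lemma prim_inv : n.-primitive_root z^-1.
Proof.
have hn := n_gt0.
have -> : z^-1 = z ^+ n.-1.
  apply: (mulIf z_neq0); rewrite mulVf ?z_neq0 // -exprSr prednK //.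
  by rewrite (prim_expr_order hz).
by rewrite (prim_root_exp_coprime _ hz); case: n hn => // k _; exact: coprimenS.
Qed.

Definition thc (t : F) (i : nat) : F := t * z ^+ i + t^-1 * z ^- i.

Lemma cheb (t u : F) : t != 0 -> u != 0 ->
  \prod_(i < n) (u + u^-1 - thc t i) = u ^+ n + u ^- n - (t ^+ n + t ^- n).
Proof.
move=> ht hu.
transitivity (\prod_(i < n) (u^-1 * ((u - t * z ^+ i) * (u - t^-1 * z^-1 ^+ i)))).
  apply: eq_bigr => i _; rewrite /thc exprVn.
  have : z ^+ i != 0 by rewrite expf_neq0 // z_neq0.
  by move=> hzi; field; rewrite hzi ht hu.
rewrite big_split /= prodr_const card_ord big_split /=.
rewrite (prod_lin _ hz ht) (prod_lin _ prim_inv) ?invr_eq0 // exprVn exprVn.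
have hU : u ^+ n != 0 by rewrite expf_neq0.
have hT : t ^+ n != 0 by rewrite expf_neq0.
by field; rewrite hT hU.
Qed.

Lemma cheb_poly (t s : F) : t != 0 -> s != 0 ->
  \prod_(i < n) ('X - (thc t i)%:P) + (t ^+ n + t ^- n)%:P
  = \prod_(i < n) ('X - (thc s i)%:P) + (s ^+ n + s ^- n)%:P.
Proof.
move=> ht hs; apply/eqP; rewrite -subr_eq0; apply/negPn/negP => /closed_nonrootP [x].
have [u hu] := @solve_monicpoly F 2 (fun i => if i == 0%N then -1 else x) isT.
rewrite !big_ord_recr big_ord0 /= add0r mulr1 in hu.
have u0 : u != 0.
  apply/eqP => h; move: hu; rewrite h expr0n /= expr1 mulr0 addr0 => /eqP.
  by rewrite eq_sym oppr_eq0 oner_eq0.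
have hx : x = u + u^-1.
  apply: (mulIf u0); rewrite mulrDl mulVf // -expr2 hu expr1; ring.
rewrite /root !(hornerD, hornerN, horner_prod, hornerC).
under eq_bigr do rewrite hornerXsubC.
under [X in _ - (X + _)]eq_bigr do rewrite hornerXsubC.
rewrite hx !cheb //.
by apply/negP; apply/negPn/eqP; ring.
Qed.

Lemma cheb_op (V : lmodType F) (A : V -> V) (v : V) t s : linear A -> t != 0 -> s != 0 ->
  Ait A (thc t) n v + (t ^+ n + t ^- n) *: v = Ait A (thc s) n v + (s ^+ n + s ^- n) *: v.
Proof.
move=> lA ht hs.
have E : forall P c, peval A v P + c *: v = peval A v (P + c%:P).
  by move=> P c; rewrite (linD (peval_lin A v)) -[c%:P]mulr1 pevalC // peval1.
by rewrite !Ait_peval // !E (cheb_poly ht hs).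
Qed.

End Cheb.


Lemma prim_q2 (F : fieldType) (q : F) d : d.-primitive_root q -> (dprime d).-primitive_root (q ^+ 2).
Proof.
move=> hq; have := exp_prim_root hq 2; rewrite /dprime.
case: ifP => hodd.
  have : coprime 2 d by rewrite coprime2n hodd.
  by rewrite /coprime => /eqP ->; rewrite divn1.
have : (2 %| d)%N by rewrite dvdn2 hodd.
by move=> /gcdn_idPl ->; rewrite divn2.
Qed.

Section Main.
Variables (F : closedFieldType) (q : F) (n : nat).
Hypothesis hz2 : n.-primitive_root (q ^+ 2).
Let hn : (0 < n)%N := prim_order_gt0 hz2.
Let hz : (q ^+ 2) ^+ n = 1 := prim_expr_order hz2.
Lemma q_neq0 : q != 0.
Proof.
apply/eqP => h; move: (z_neq0 hz2); by rewrite h expr0n /= eqxx.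
Qed.
Let hq := q_neq0.

Lemma theta_thc a lam i : theta q a lam i = thc (q ^+ 2) (a / lam) i.
Proof. by rewrite /theta /thc -!exprM invfM invrK mulrC. Qed.

Lemma s0E (a lam : F) : (a / lam) ^+ n + (a / lam) ^- n = a ^+ n * lam ^- n + a ^- n * lam ^+ n.
Proof. by rewrite exprMn exprVn invfM invrK. Qed.

Lemma AitX a b c lam k j :
  Ait (AM q a b c lam) (fun i => theta q a lam (k + i)) j 'X^k = 'X^(k + j).
Proof.
elim: j => [|j IH] /=; first by rewrite addn0.
by rewrite IH AM_Xn addnS addrC addKr.
Qed.

Lemma AitX0 a b c lam j : Ait (AM q a b c lam) (theta q a lam) j 1 = 'X^j.
Proof. by have := AitX a b c lam 0 j; rewrite add0n expr0. Qed.

Lemma AitXn a b c lam j :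
  Ait (AM q a b c lam) (theta q a lam) j 'X^n = 'X^(j + n).
Proof.
rewrite addnC -(AitX a b c lam n j); apply: Ait_ext => i _; by rewrite addnC theta_per.
Qed.

Lemma K1 delta a b c lam (v : 'rV[F]_n) :
  Ait (AW q delta a b c lam) (theta q a lam) n v = delta *: v.
Proof.
rewrite -[v](piW_liftW delta hn) -(@Ait_hom _ _ _ _ (AM q a b c lam)); last first.
- by move=> x; rewrite piW_AM.
- exact: piW_linear.
apply: (lin_poly_ext (f := fun p => piW n delta (Ait (AM q a b c lam) (theta q a lam) n p))
                     (g := fun p => delta *: piW n delta p)).
- exact: lin_comp (Ait_lin (AM_lin _ _ _ _ _) _ _) (piW_linear _ _).
- by move=> k x y; rewrite piW_linear scalerDr !scalerA mulrC.
move=> j.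
rewrite -(AitX0 a b c lam j) Ait_comm ?(AitX0 a b c lam n) ?AitXn ?AitX0; [exact: piW_Xn | exact: AM_lin].
Qed.

Lemma K (dbar abar bbar cbar lbar a lam : F) (v : 'rV[F]_n) :
  a != 0 -> lam != 0 -> abar != 0 -> lbar != 0 ->
  Ait (AW q dbar abar bbar cbar lbar) (theta q a lam) n v
  = (dbar + (abar ^+ n * lbar ^- n + abar ^- n * lbar ^+ n)
          - (a ^+ n * lam ^- n + a ^- n * lam ^+ n)) *: v.
Proof.
move=> ha hl hab hlb.
have ht : a / lam != 0 by rewrite mulf_neq0 ?invr_eq0.
have hs : abar / lbar != 0 by rewrite mulf_neq0 ?invr_eq0.
have := cheb_op hz2 v (@AW_lin _ q n dbar abar bbar cbar lbar) ht hs.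
rewrite !s0E.
rewrite (Ait_ext _ (th' := theta q a lam)); last by move=> i _; rewrite theta_thc.
rewrite (Ait_ext _ (th := thc _ (abar / lbar)) (th' := theta q abar lbar)); last by move=> i _; rewrite theta_thc.
rewrite K1 => h.
apply: (addIr ((a ^+ n * lam ^- n + a ^- n * lam ^+ n) *: v)).
by rewrite h -!scalerDl; congr (_ *: _); ring.
Qed.

End Main.

Unset Implicit Arguments.

Theorem proposition7p3 (F : closedFieldType) (q : F) (d : nat)
  (hq : d.-primitive_root q) (hd1 : d <> 1%N) (hd2 : d <> 2%N) (hd4 : d <> 4%N)
  (a b c lam delta abar bbar cbar lbar dbar : F)
  (ha : a != 0) (hb : b != 0) (hc : c != 0) (hl : lam != 0)
  (hab : abar != 0) (hbb : bbar != 0) (hcb : cbar != 0) (hlb : lbar != 0)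
  (wbar : 'rV[F]_(dprime d)) (hw : wbar != 0) :
  (exists f : 'rV[F]_(dprime d) -> 'rV[F]_(dprime d),
      homWW q delta a b c lam dbar abar bbar cbar lbar f
      /\ f (wvec (dprime d) delta 0) = wbar)
  <->
  ((exists g : {poly F} -> 'rV[F]_(dprime d),
      homMW q a b c lam dbar abar bbar cbar lbar g /\ g 1 = wbar)
   /\ delta + a ^+ dprime d * lam ^- dprime d + a ^- dprime d * lam ^+ dprime d
      = dbar + abar ^+ dprime d * lbar ^- dprime d
             + abar ^- dprime d * lbar ^+ dprime d).
Proof.
have hz2 := prim_q2 hq.
move: wbar hw; set n := dprime d => wbar hw.
have hn : (0 < n)%N := prim_order_gt0 hz2.
have hz : (q ^+ 2) ^+ n = 1 := prim_expr_order hz2.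
have hq0 : q != 0 := q_neq0 hz2.
set S := a ^+ n * lam ^- n + a ^- n * lam ^+ n.
set Sb := abar ^+ n * lbar ^- n + abar ^- n * lbar ^+ n.
have hK := fun v => K hz2 dbar bbar cbar v ha hl hab hlb.
rewrite -/S -/Sb in hK.
split.
- move=> [f [[flin [fA fB fC]] f0]].
  split.
    exists (fun p => f (piW n delta p)); split; last by rewrite -f0 /wvec expr0.
    split; first exact: lin_comp (piW_linear _ _) flin.
    split => p /=.
    + by rewrite piW_AM // fA.
    + by rewrite piW_BM // fB.
    + by rewrite piW_CM // fC.
  have h1 : Ait (AW q delta a b c lam) (theta q a lam) n (piW n delta 1) = delta *: piW n delta 1.
    rewrite -(@Ait_hom _ _ _ _ (AM q a b c lam)); last by move=> x; rewrite piW_AM.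
      by rewrite AitX0 -(add0n n) piW_Xn // expr0.
    exact: piW_linear.
  have h2 := congr1 f h1.
  rewrite (Ait_hom _ _ _ flin fA) (linZ flin) -/(wvec n delta 0) in h2.
  rewrite /wvec expr0 in f0.
  rewrite /wvec expr0 f0 hK in h2.
  move/eqP: h2; rewrite -subr_eq0 -scalerBl scaler_eq0 (negbTE hw) orbF subr_eq0 => /eqP h.
  by rewrite -h /S /Sb; ring.
- move=> [[g [[glin [gA gB gC]] g1]] hd].
  rewrite -/S -/Sb in hd.
  have hX : forall j, g 'X^j = Ait (AW q dbar abar bbar cbar lbar) (theta q a lam) j wbar.
    by move=> j; rewrite -(AitX0 q a b c lam j) (Ait_hom _ _ _ glin gA) g1.
  have hkill : forall j, g ('X^j * ('X^n - delta%:P)) = 0.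
    move=> j; rewrite Xm (linB glin) (linZ glin) -(AitXn hz2 a b c lam j).
    rewrite (Ait_hom _ _ _ glin gA) -(AitX0 q a b c lam n) (Ait_hom _ _ _ glin gA) g1 hK.
    have -> : dbar + Sb - S = delta.
      by apply: (addIr S); rewrite subrK /S /Sb; rewrite -!addrA in hd; rewrite -hd.
    by rewrite (linZ (Ait_lin (AW_lin _ _ _ _ _ _) _ _)) hX subrr.
  have gk := gkill hn glin hkill.
  exists (fun v => g (liftW v)); split; last by rewrite /wvec gk expr0.
  split; first exact: (lin_comp (@liftW_linear _ n) glin).
  split => v /=.
  + by rewrite /AW gk gA.
  + by rewrite /BW gk gB.
  + by rewrite /CW gk gC.
Qed.
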